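(* For every $x\in\mathbb{X}$, with $x^+=f(x,\kappa(x))$, one has $V(x^+)\le V(x)-l(x,\kappa(x))$.
   Context: Consider the discrete-time controlled system $x^+=f(x,u)$ with state $x\in\mathbb{R}^{n}$ and control $u\in\mathbb{R}^{m}$, constraint sets $\mathbb{X}\subset\mathbb{R}^n$, $\mathbb{U}\subset\mathbb{R}^m$, $\mathbb{Y}\subset\mathbb{R}^p$, and a constraint function $h(x,u)\in\mathbb{R}^p$. A control $u$ is feasible at $x\in\mathbb{X}$ if $u\in\mathbb{U}$, $f(x,u)\in\mathbb{X}$ and $h(x,u)\in\mathbb{Y}$. A control sequence $(u(0),\ldots,u(N-1))$ is feasible from $x$ if, for the state sequence defined by $x(0)=x$ and $x(k+1)=f(x(k),u(k))$, each $u(k)$ is feasible at $x(k)$. We are given a stage cost $l(x,u)$, a terminal set $\mathbb{X}_f$ and a terminal cost $V_f$ defined on $\mathbb{X}_f$. Horizon-$N$ problem at $x$: minimize $\sum_{k=0}^{N-1}l(x(k),u(k))+V_f(x(N))$ over control sequences that are feasible from $x$ and satisfy $x(N)\in\mathbb{X}_f$. Let $V_N^0(x)$ be its minimum value, which is assumed to be attained whenever the feasible set is nonempty. Let $(u^0_N(0),\ldots,u^0_N(N-1))$ be a minimizer, and set $\kappa_N(x)=u_N^0(0)$. For $N=0$, $V_0^0(x)=V_f(x)$ for $x\in\mathbb{X}_f$. Standing assumptions: (A1) $f,l,h,V_f$ are continuous on an open set containing $\mathbb{X}\times\mathbb{U}$ (for $V_f$, an open set containing $\mathbb{X}_f$).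 The stage cost $l$ is nonnegative definite in $(x,u)$ and positive definite in $u$. $V_f$ is positive definite on $\mathbb{X}_f$. Moreover $f(0,0)=0$, $l(0,0)=0$ and $V_f(0)=0$. (A2) $\mathbb{X}$ and $\mathbb{X}_f$ are closed, $\mathbb{X}_f\subset\mathbb{X}$, $\mathbb{U}$ is compact, and $\mathbb{X},\mathbb{X}_f,\mathbb{U}$ each contain a neighborhood of the origin. (A3) For every $x\in\mathbb{X}_f$ there is a control $u$ feasible at $x$ with $f(x,u)\in\mathbb{X}_f$ and $l(x,u)+V_f(f(x,u))\le V_f(x)$. (A4) For every $x\in\mathbb{X}$ there exist an integer $N\ge0$ and a feasible control sequence of length $N$ from $x$ whose state sequence satisfies $x(N)\in\mathbb{X}_f$. For $x\in\mathbb{X}$, $N(x)$ denotes the minimum such $N$. (A5) There is an integer $M\ge 0$ with $N(x)\le M$ for all $x\in\mathbb{X}$. Define $V(x)=V^0_{N(x)}(x)$ for $x\in\mathbb{X}$. For $N(x)\ge1$ set $\kappa(x)=\kappa_{N(x)}(x)$. For $N(x)=0$ (equivalently $x\in\mathbb{X}_f$), let $\kappa(x)$ be a feasible control $u$ as in (A3). *)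

(* Defs.v *)
From HB Require Import structures.
From mathcomp Require Import all_boot all_order all_algebra.
From mathcomp Require Import all_classical all_reals all_analysis.
Set Implicit Arguments. Unset Strict Implicit. Unset Printing Implicit Defensive.
Import Order.TTheory GRing.Theory Num.Theory.
Import numFieldNormedType.Exports.
Local Open Scope classical_set_scope.
Local Open Scope ring_scope.

Section MPC.
Variables (R : realType) (n m p : nat).
Variable f : 'rV[R]_n -> 'rV[R]_m -> 'rV[R]_n.
Variable h : 'rV[R]_n -> 'rV[R]_m -> 'rV[R]_p.
Variables (X : set 'rV[R]_n) (U : set 'rV[R]_m) (Y : set 'rV[R]_p).
Variable l : 'rV[R]_n -> 'rV[R]_m -> R.
Variable Xf : set 'rV[R]_n.
Variable Vf : 'rV[R]_n -> R.

Definition feasible_at (x : 'rV[R]_n) (u : 'rV[R]_m) : Prop :=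
  U u /\ X (f x u) /\ Y (h x u).

Fixpoint traj (x : 'rV[R]_n) (u : nat -> 'rV[R]_m) (k : nat) : 'rV[R]_n :=
  match k with
  | 0 => x
  | k'.+1 => f (traj x u k') (u k')
  end.

(* (u(0),...,u(N-1)) is feasible from x (values u k, k >= N, are irrelevant) *)
Definition feasible_seq (N : nat) (x : 'rV[R]_n) (u : nat -> 'rV[R]_m) : Prop :=
  forall k, (k < N)%N -> feasible_at (traj x u k) (u k).

Definition admissible (N : nat) (x : 'rV[R]_n) (u : nat -> 'rV[R]_m) : Prop :=
  feasible_seq N x u /\ Xf (traj x u N).

Definition cost (N : nat) (x : 'rV[R]_n) (u : nat -> 'rV[R]_m) : R :=
  \sum_(k < N) l (traj x u k) (u k) + Vf (traj x u N).

Definition VN0 (N : nat) (x : 'rV[R]_n) : R :=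
  inf [set cost N x u | u in admissible N x].

Definition is_minimizer (N : nat) (x : 'rV[R]_n) (u : nat -> 'rV[R]_m) : Prop :=
  admissible N x u /\ forall v, admissible N x v -> cost N x u <= cost N x v.

End MPC.

(* Main.v *)
Require Import Defs.
From HB Require Import structures.
From mathcomp Require Import all_boot all_order all_algebra.
From mathcomp Require Import all_classical all_reals all_analysis.
Import Order.TTheory GRing.Theory Num.Theory.
Import numFieldNormedType.Exports.
Local Open Scope classical_set_scope.
Local Open Scope ring_scope.


Lemma traj_shift (R : realType) (n m : nat) (f : 'rV[R]_n -> 'rV[R]_m -> 'rV[R]_n)
  x (u : nat -> 'rV[R]_m) k :
  traj f (f x (u 0%N)) (fun k => u k.+1) k = traj f x u k.+1.
Proof. by elim: k => //= k ->. Qed.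

Lemma VN0_min (R : realType) (n m p : nat)
  (f : 'rV[R]_n -> 'rV[R]_m -> 'rV[R]_n)
  (h : 'rV[R]_n -> 'rV[R]_m -> 'rV[R]_p)
  (X : set 'rV[R]_n) (U : set 'rV[R]_m) (Y : set 'rV[R]_p)
  (l : 'rV[R]_n -> 'rV[R]_m -> R)
  (Xf : set 'rV[R]_n) (Vf : 'rV[R]_n -> R) N x u :
  is_minimizer f h X U Y l Xf Vf N x u -> VN0 f h X U Y l Xf Vf N x = cost f l Vf N x u.
Proof.
move=> [ha hm]; apply/eqP; rewrite eq_le; apply/andP; split.
  apply: ge_inf; last by exists u.
  by exists (cost f l Vf N x u) => _ [v hv <-]; exact: hm.
apply: lb_le_inf; first by exists (cost f l Vf N x u), u.
by move=> _ [v hv <-]; exact: hm.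
Qed.

Lemma VN0_le (R : realType) (n m p : nat)
  (f : 'rV[R]_n -> 'rV[R]_m -> 'rV[R]_n)
  (h : 'rV[R]_n -> 'rV[R]_m -> 'rV[R]_p)
  (X : set 'rV[R]_n) (U : set 'rV[R]_m) (Y : set 'rV[R]_p)
  (l : 'rV[R]_n -> 'rV[R]_m -> R)
  (Xf : set 'rV[R]_n) (Vf : 'rV[R]_n -> R) N x u v :
  is_minimizer f h X U Y l Xf Vf N x u -> admissible f h X U Y Xf N x v ->
  VN0 f h X U Y l Xf Vf N x <= cost f l Vf N x v.
Proof. by move=> hu hv; move: (hu) => [_ hm]; rewrite (@VN0_min R n m p f h X U Y l Xf Vf N x u hu); exact: hm. Qed.

Lemma cost_S (R : realType) (n m : nat)
  (f : 'rV[R]_n -> 'rV[R]_m -> 'rV[R]_n) (l : 'rV[R]_n -> 'rV[R]_m -> R)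
  (Vf : 'rV[R]_n -> R) N x u :
  cost f l Vf N.+1 x u = l x (u 0%N) + cost f l Vf N (f x (u 0%N)) (fun k => u k.+1).
Proof.
rewrite /cost big_ord_recl /= traj_shift addrA; congr (_ + _ + _).
by apply: eq_bigr => i _; rewrite traj_shift.
Qed.

Lemma adm_S (R : realType) (n m p : nat)
  (f : 'rV[R]_n -> 'rV[R]_m -> 'rV[R]_n)
  (h : 'rV[R]_n -> 'rV[R]_m -> 'rV[R]_p)
  (X : set 'rV[R]_n) (U : set 'rV[R]_m) (Y : set 'rV[R]_p)
  (Xf : set 'rV[R]_n) N x u :
  admissible f h X U Y Xf N.+1 x u <->
  feasible_at f h X U Y x (u 0%N) /\
  admissible f h X U Y Xf N (f x (u 0%N)) (fun k => u k.+1).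
Proof.
rewrite /admissible /feasible_seq traj_shift; split.
  move=> [hs hf]; split; first exact: (hs 0%N).
  by split=> // k hk; rewrite traj_shift; apply: hs.
move=> [h0 [hs hf]]; split=> // -[|k] hk //.
by rewrite -traj_shift; apply: hs.
Qed.
Theorem lemma2 (R : realType) (n m p : nat)
  (f : 'rV[R]_n -> 'rV[R]_m -> 'rV[R]_n)
  (h : 'rV[R]_n -> 'rV[R]_m -> 'rV[R]_p)
  (X : set 'rV[R]_n) (U : set 'rV[R]_m) (Y : set 'rV[R]_p)
  (l : 'rV[R]_n -> 'rV[R]_m -> R)
  (Xf : set 'rV[R]_n) (Vf : 'rV[R]_n -> R)
  (Nx : 'rV[R]_n -> nat)
  (kappa : 'rV[R]_n -> 'rV[R]_m)
  (* (A1) *)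
  (hcont : exists O : set ('rV[R]_n * 'rV[R]_m),
      [/\ open O, X `*` U `<=` O,
          {in O, continuous (fun z => f z.1 z.2)},
          {in O, continuous (fun z => l z.1 z.2)} &
          {in O, continuous (fun z => h z.1 z.2)}])
  (hVfcont : exists O : set 'rV[R]_n, [/\ open O, Xf `<=` O & {in O, continuous Vf}])
  (hl_nonneg : forall x u, 0 <= l x u)
  (hl_posu : forall x u, u != 0 -> 0 < l x u)
  (hVf_pos : forall x, Xf x -> x != 0 -> 0 < Vf x)
  (hf0 : f 0 0 = 0) (hl0 : l 0 0 = 0) (hVf0 : Vf 0 = 0)
  (* (A2) *)
  (hXcl : closed X) (hXfcl : closed Xf) (hXfX : Xf `<=` X) (hUcp : compact U)
  (hXn : nbhs (0 : 'rV[R]_n) X) (hXfn : nbhs (0 : 'rV[R]_n) Xf)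
  (hUn : nbhs (0 : 'rV[R]_m) U)
  (* (A3) *)
  (hA3 : forall x, Xf x -> exists u, [/\ feasible_at f h X U Y x u, Xf (f x u) &
            l x u + Vf (f x u) <= Vf x])
  (* (A4) and the definition of N(x) as the minimal such horizon *)
  (hA4 : forall x, X x -> exists N u, admissible f h X U Y Xf N x u)
  (hNx : forall x, X x ->
     (exists u, admissible f h X U Y Xf (Nx x) x u) /\
     (forall N u, admissible f h X U Y Xf N x u -> (Nx x <= N)%N))
  (* (A5) *)
  (hA5 : exists M : nat, forall x, X x -> (Nx x <= M)%N)
  (* minima of the horizon-N problems are attained *)
  (hattain : forall N x, (exists u, admissible f h X U Y Xf N x u) ->
     exists u, is_minimizer f h X U Y l Xf Vf N x u)
  (* definition of kappa *)
  (hkappa_pos : forall x, X x -> (0 < Nx x)%N ->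
     exists u, is_minimizer f h X U Y l Xf Vf (Nx x) x u /\ kappa x = u 0%N)
  (hkappa_0 : forall x, X x -> Nx x = 0%N ->
     [/\ feasible_at f h X U Y x (kappa x), Xf (f x (kappa x)) &
         l x (kappa x) + Vf (f x (kappa x)) <= Vf x]) :
  forall x, X x ->
    VN0 f h X U Y l Xf Vf (Nx (f x (kappa x))) (f x (kappa x))
      <= VN0 f h X U Y l Xf Vf (Nx x) x - l x (kappa x).
Proof.
move=> x Xx.
have Vmin := @VN0_min R n m p f h X U Y l Xf Vf.
have Vle := @VN0_le R n m p f h X U Y l Xf Vf.
have AS := @adm_S R n m p f h X U Y Xf.
have min0 : forall y, Xf y -> is_minimizer f h X U Y l Xf Vf 0 y (fun _ => 0).
  move=> y Xfy; split; first by split.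
  by move=> v _; rewrite /cost !big_ord0.
have cost0 : forall y (v : nat -> 'rV[R]_m), cost f l Vf 0 y v = Vf y.
  by move=> y v; rewrite /cost big_ord0 add0r.
case E: (Nx x) => [|N'].
  have [[fe [Xp _]] Xfp hle] := hkappa_0 x Xx E.
  have Xfx : Xf x.
    by have [[u [_ hu]] _] := hNx x Xx; rewrite E in hu.
  have Ep : Nx (f x (kappa x)) = 0%N.
    apply/eqP; rewrite -leqn0.
    by apply: (proj2 (hNx _ Xp) 0%N (fun _ => 0)); split.
  rewrite Ep (Vmin _ _ _ (min0 _ Xfp)) (Vmin _ _ _ (min0 _ Xfx)) !cost0.
  by rewrite lerBrDr addrC.
have [u [hu ->]] := hkappa_pos x Xx (ltac:(by rewrite E)).
have hu1 := hu.1; rewrite E in hu1.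
have [fe ad'] := (AS _ _ _).1 hu1.
have Xp : X (f x (u 0%N)) by case: fe => _ [].
have [[w hw] hmin] := hNx _ Xp.
have le1 := hmin _ _ ad'.
set x' := f x (u 0%N) in hw le1 Xp hmin ad' *.
have ge1 : (N'.+1 <= (Nx x').+1)%N.
  rewrite -E; apply: (proj2 (hNx _ Xx)
    (Nx x').+1 (fun k => if k is k'.+1 then w k' else u 0%N)).
  by apply/AS.
have Ep : Nx x' = N' by apply/eqP; rewrite eqn_leq le1 -ltnS.
rewrite Ep.
have [w' hw'] := hattain N' x' (ex_intro _ _ ad').
rewrite -E (Vmin _ _ _ hu) E cost_S.
rewrite (_ : (l x (u 0%N) + _ - _) = cost f l Vf N' x' (fun k => u k.+1)); last first.
  by rewrite addrAC subrr add0r.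
exact: Vle _ _ _ _ hw' ad'.
Qed.
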